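(* Let $m>0$, $R>m/2$, and $\lambda\le 0$. Using Euclidean polar coordinates $(r,\theta)$ on the annulus $\{m/2\le r\le R\}$ in the plane, suppose $u=u(r,\theta)$ is a smooth solution of $$u_{rr}+\frac{u_r}{r}+\frac{u_{\theta\theta}}{r^2}+\frac{m}{r^3}\Big(1+\frac{m}{2r}\Big)^{-2}u+\lambda\Big(1+\frac{m}{2r}\Big)^4u=0$$ with $u_r=0$ on $r=m/2$ and $u=0$ on $r=R$. Then (a) $u$ is radial, i.e. $u=u(r)$; and (b) the space of such solutions has dimension at most one, i.e. each non-positive eigenvalue of this problem has multiplicity one.
   Context: This equation with these boundary conditions is the eigenvalue equation $L_{\Sigma_0}u+\lambda e^{2\varphi}u=0$ (written in Euclidean terms) for the Jacobi operator of the plane $\Sigma_0=\{x_3=0\}$ in the Schwarzschild manifold $M=\{|x|\ge m/2\}$, $g=e^{2\varphi}\delta$, $e^{2\varphi}=(1+\frac{m}{2|x|})^4$, restricted to $\{|x|\le R\}$, with Dirichlet condition on $|x|=R$ and the free-boundary (Neumann) condition on the horizon $|x|=m/2$. *)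

(* Defs.v *)
From Stdlib Require Import Reals Lra List.
Open Scope R_scope.

(* Closed annulus in polar coordinates: a <= r <= b, theta arbitrary. *)
Definition in_strip (a b r : R) : Prop := a <= r <= b.

Definition deriv_within (a b : R) (g : R -> R) (x l : R) : Prop :=
  forall eps, 0 < eps -> exists delta, 0 < delta /\
    forall h, h <> 0 -> Rabs h < delta -> a <= x + h <= b ->
      Rabs ((g (x + h) - g x) / h - l) < eps.

Definition cont_strip (a b : R) (f : R -> R -> R) : Prop :=
  forall r t, in_strip a b r -> forall eps, 0 < eps -> exists delta, 0 < delta /\
    forall r' t', in_strip a b r' -> Rabs (r' - r) < delta -> Rabs (t' - t) < delta ->
      Rabs (f r' t' - f r t) < eps.

(* F w = iterated partial derivative of u along the word w
   (true = d/dr, false = d/dtheta; the head of w is the last derivative taken). *)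
Definition Cinf_family (a b : R) (u : R -> R -> R) (F : list bool -> R -> R -> R) : Prop :=
  F nil = u /\
  (forall w, cont_strip a b (F w)) /\
  (forall w r t, in_strip a b r ->
      deriv_within a b (fun s => F w s t) r (F (true :: w) r t)) /\
  (forall w r t, in_strip a b r ->
      derivable_pt_lim (fun s => F w r s) t (F (false :: w) r t)).

Definition is_solution (m Rr lam : R) (u : R -> R -> R) : Prop :=
  (forall r t, u r (t + 2 * PI) = u r t) /\
  exists F, Cinf_family (m / 2) Rr u F /\
    (forall r t, in_strip (m / 2) Rr r ->
       F (true :: true :: nil) r t + F (true :: nil) r t / r
       + F (false :: false :: nil) r t / r ^ 2
       + m / r ^ 3 * / (1 + m / (2 * r)) ^ 2 * u r t
       + lam * (1 + m / (2 * r)) ^ 4 * u r t = 0) /\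
    (forall t, F (true :: nil) (m / 2) t = 0) /\
    (forall t, u Rr t = 0).

(* Main.v *)
Require Import Defs.
From Stdlib Require Import Reals Lra Lia ZArith.
From Coquelicot Require Import Coquelicot.
Open Scope R_scope.

Definition cont_in (a b : R) (f : R -> R) (x : R) : Prop :=
  forall eps, 0 < eps -> exists d, 0 < d /\
    forall y, a <= y <= b -> Rabs (y - x) < d -> Rabs (f y - f x) < eps.

Definition clamp (a b x : R) : R := Rmax a (Rmin b x).

Lemma clamp_in a b x : a <= b -> a <= clamp a b x <= b.
Proof. intros; unfold clamp, Rmax, Rmin; repeat destruct Rle_dec; lra. Qed.

Lemma clamp_id a b x : a <= x <= b -> clamp a b x = x.
Proof. intros; unfold clamp, Rmax, Rmin; repeat destruct Rle_dec; lra. Qed.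

Lemma clamp_lip a b x y : a <= b -> Rabs (clamp a b x - clamp a b y) <= Rabs (x - y).
Proof. intros; unfold clamp, Rmax, Rmin; repeat destruct Rle_dec;
  unfold Rabs; repeat destruct Rcase_abs; lra. Qed.

Lemma cont_in_clamp a b f x : a <= b -> a <= x <= b -> cont_in a b f x ->
  continuity_pt (fun s => f (clamp a b s)) x.
Proof.
  intros hab hx hc eps heps. destruct (hc eps heps) as [d [hd H]].
  exists d; split; [lra|]. intros y [_ hy]. simpl in *. unfold R_dist in *.
  rewrite (clamp_id a b x hx).
  apply H. apply clamp_in; lra. replace (clamp a b y - x) with (clamp a b y - clamp a b x) by (rewrite (clamp_id a b x hx); ring).
  eapply Rle_lt_trans. apply clamp_lip; lra. lra.
Qed.

Lemma clamp_cont_in a b f x : a <= x <= b ->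
  continuity_pt (fun s => f (clamp a b s)) x -> cont_in a b f x.
Proof.
  intros hx hc eps heps. destruct (hc eps heps) as [d [hd H]].
  exists d; split; [lra|]. intros y hy hyx.
  destruct (Req_dec y x). subst. rewrite Rminus_diag, Rabs_R0; lra.
  specialize (H y). simpl in H. unfold R_dist in H.
  rewrite (clamp_id a b x hx), (clamp_id a b y hy) in H. apply H. split.
  - unfold D_x, no_cond; split; auto.
  - auto.
Qed.

Lemma cont_pt_in a b f x : continuity_pt f x -> cont_in a b f x.
Proof.
  intros hc eps heps. destruct (hc eps heps) as [d [hd H]].
  exists d; split; [lra|]. intros y hy hyx.
  destruct (Req_dec y x). subst. rewrite Rminus_diag, Rabs_R0; lra.
  apply (H y). split. split; [exact I|auto]. exact hyx.
Qed.

Lemma cont_in_sub a b x y f s : a <= x -> y <= b -> cont_in a b f s -> cont_in x y f s.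
Proof.
  intros h1 h2 hc eps heps. destruct (hc eps heps) as [d [hd H]]. exists d; split; auto.
  intros z hz. apply H; lra.
Qed.

Lemma ext_val a b f : a <= b -> (forall x, a <= x <= b -> cont_in a b f x) ->
  exists M, a <= M <= b /\ forall s, a <= s <= b -> f s <= f M.
Proof.
  intros hab hc.
  destruct (continuity_ab_maj (fun s => f (clamp a b s)) a b hab) as [M [HM HMi]].
  { intros; apply cont_in_clamp; auto. }
  exists M; split; auto. intros s hs. specialize (HM s hs).
  rewrite !clamp_id in HM; auto.
Qed.

Lemma dw_lim a b g x l : a < x < b -> deriv_within a b g x l -> derivable_pt_lim g x l.
Proof.
  intros hx hd eps heps. destruct (hd eps heps) as [d [hdp H]].
  assert (hp : 0 < Rmin d (Rmin (x - a) (b - x))).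
  { apply Rmin_pos; [lra| apply Rmin_pos; lra]. }
  exists (mkposreal _ hp). intros h hh hlt. simpl in hlt.
  apply H; auto.
  - eapply Rlt_le_trans; [exact hlt| apply Rmin_l].
  - assert (Rabs h < x - a) by (eapply Rlt_le_trans; [exact hlt|]; eapply Rle_trans; [apply Rmin_r| apply Rmin_l]).
    assert (Rabs h < b - x) by (eapply Rlt_le_trans; [exact hlt|]; eapply Rle_trans; [apply Rmin_r| apply Rmin_r]).
    revert H0 H1; unfold Rabs; destruct Rcase_abs; intros; lra.
Qed.

Lemma dw_cont a b g x l : a <= x <= b -> deriv_within a b g x l -> cont_in a b g x.
Proof.
  intros hx hd eps heps. destruct (hd 1 Rlt_0_1) as [d [hdp H]].
  assert (hp : 0 < Rmin d (eps / (Rabs l + 1))).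
  { apply Rmin_pos; [lra|]. apply Rdiv_lt_0_compat; auto. pose proof (Rabs_pos l); lra. }
  exists (Rmin d (eps / (Rabs l + 1))); split; auto.
  intros y hy hyx. destruct (Req_dec y x). subst; rewrite Rminus_diag, Rabs_R0; lra.
  set (h := y - x). assert (hh : h <> 0) by (unfold h; lra).
  assert (hlt : Rabs h < d) by (eapply Rlt_le_trans; [exact hyx| apply Rmin_l]).
  assert (hlt2 : Rabs h < eps / (Rabs l + 1)) by (eapply Rlt_le_trans; [exact hyx| apply Rmin_r]).
  specialize (H h hh hlt). replace (x + h) with y in H by (unfold h; ring).
  specialize (H ltac:(lra)).
  assert (E : g y - g x = ((g y - g x) / h - l) * h + l * h) by (field; auto).
  rewrite E. eapply Rle_lt_trans. apply Rabs_triang. rewrite !Rabs_mult.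
  assert (Rabs h * (Rabs l + 1) < eps).
  { apply (Rmult_lt_compat_r (Rabs l + 1)) in hlt2; [|pose proof (Rabs_pos l); lra].
    unfold Rdiv in hlt2; rewrite Rmult_assoc, Rinv_l in hlt2; [lra|]. pose proof (Rabs_pos l); lra. }
  pose proof (Rabs_pos h). pose proof (Rabs_pos l). nra.
Qed.

Lemma mvt_in f df x y : x < y ->
  (forall s, x <= s <= y -> cont_in x y f s) ->
  (forall s, x < s < y -> derivable_pt_lim f s (df s)) ->
  exists c, x < c < y /\ f y - f x = df c * (y - x).
Proof.
  intros hxy hc hd.
  set (g := fun s => f (clamp x y s)).
  assert (hg : forall s, x < s < y -> derivable_pt_lim g s (df s)).
  { intros s hs. apply is_derive_Reals.
    apply (is_derive_ext_loc f). 2: apply is_derive_Reals, hd; exact hs.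
    assert (hp : 0 < Rmin (s - x) (y - s)) by (apply Rmin_pos; lra).
    exists (mkposreal _ hp). intros t ht. unfold g. rewrite clamp_id; auto.
    unfold ball in ht; simpl in ht; unfold AbsRing_ball, abs, minus, plus, opp in ht; simpl in ht.
    assert (Rabs (t - s) < s - x) by (eapply Rlt_le_trans; [exact ht| apply Rmin_l]).
    assert (Rabs (t - s) < y - s) by (eapply Rlt_le_trans; [exact ht| apply Rmin_r]).
    revert H H0; unfold Rabs; destruct Rcase_abs; intros; lra. }
  assert (pr1 : forall c, x < c < y -> derivable_pt g c).
  { intros c hc'. exists (df c). apply hg; auto. }
  assert (pr2 : forall c, x < c < y -> derivable_pt id c).
  { intros c _. apply derivable_pt_id. }
  destruct (MVT g id x y pr1 pr2 hxy) as [c [P E]].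
  { intros; apply cont_in_clamp; auto; lra. }
  { intros; apply derivable_continuous_pt, derivable_pt_id. }
  exists c; split; auto.
  rewrite (derive_pt_eq_0 g c (df c) (pr1 c P) (hg c P)) in E.
  rewrite (derive_pt_eq_0 id c 1 (pr2 c P) (derivable_pt_lim_id c)) in E.
  unfold g, id in E. rewrite !clamp_id in E; lra.
Qed.

Lemma fermat f x l a b : a < x < b -> derivable_pt_lim f x l ->
  (forall s, a <= s <= b -> f s <= f x) -> l = 0.
Proof.
  intros hx hd hm. destruct (Rtotal_order l 0) as [hl|[hl|hl]]; auto; exfalso.
  - destruct (hd (- l) ltac:(lra)) as [d H].
    assert (hpos : 0 < Rmin (d/2) ((x-a)/2)) by (apply Rmin_pos; pose proof (cond_pos d); lra).
    assert (h1 : Rmin (d/2) ((x-a)/2) <= d/2) by apply Rmin_l.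
    assert (h2 : Rmin (d/2) ((x-a)/2) <= (x-a)/2) by apply Rmin_r.
    set (mm := Rmin (d/2) ((x-a)/2)) in *. set (h := - mm).
    assert (hh : h <> 0) by (unfold h; lra).
    assert (ha : Rabs h < d) by (unfold h; rewrite Rabs_Ropp, Rabs_right; pose proof (cond_pos d); lra).
    specialize (H h hh ha). specialize (hm (x + h) ltac:(unfold h; lra)).
    set (q := (f (x + h) - f x) / h) in *.
    assert (E : q * h = f (x + h) - f x) by (unfold q; field; auto).
    assert (hn : h < 0) by (unfold h; lra). assert (q >= 0) by (clear -E hm hn; nra).
    revert H; unfold Rabs; destruct Rcase_abs; intros; lra.
  - destruct (hd l ltac:(lra)) as [d H].
    assert (hpos : 0 < Rmin (d/2) ((b-x)/2)) by (apply Rmin_pos; pose proof (cond_pos d); lra).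
    assert (h1 : Rmin (d/2) ((b-x)/2) <= d/2) by apply Rmin_l.
    assert (h2 : Rmin (d/2) ((b-x)/2) <= (b-x)/2) by apply Rmin_r.
    set (h := Rmin (d/2) ((b-x)/2)) in *.
    assert (hh : h <> 0) by lra.
    assert (ha : Rabs h < d) by (rewrite Rabs_right; pose proof (cond_pos d); lra).
    specialize (H h hh ha). specialize (hm (x + h) ltac:(lra)).
    set (q := (f (x + h) - f x) / h) in *.
    assert (E : q * h = f (x + h) - f x) by (unfold q; field; auto).
    assert (hn : h > 0) by lra. assert (q <= 0) by (clear -E hm hn; nra).
    revert H; unfold Rabs; destruct Rcase_abs; intros; lra.
Qed.

Lemma UC a b (f : R -> R -> R) : cont_strip a b f -> forall r0, a <= r0 <= b ->
  forall c d, c <= d -> forall eps, 0 < eps -> exists del, 0 < del /\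
  forall r, a <= r <= b -> Rabs (r - r0) < del -> forall t, c <= t <= d ->
    Rabs (f r t - f r0 t) < eps.
Proof.
  intros hf r0 hr0 c d hcd eps heps.
  set (E := fun x => c <= x <= d /\ exists del, 0 < del /\
     forall r, a <= r <= b -> Rabs (r - r0) < del -> forall t, c <= t <= x ->
       Rabs (f r t - f r0 t) < eps).
  assert (Ec : E c).
  { split; [lra|]. destruct (hf r0 c hr0 eps heps) as [del [hdel H]].
    exists del; split; auto. intros r hr hrr t ht.
    replace t with c by lra. apply H; auto. rewrite Rminus_diag, Rabs_R0; auto. }
  assert (hb : bound E) by (exists d; intros x [hx _]; lra).
  destruct (completeness E hb (ex_intro _ c Ec)) as [s [hub hlub]].
  assert (hcs : c <= s) by (apply hub; auto).
  assert (hsd : s <= d) by (apply hlub; intros x [hx _]; lra).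
  destruct (hf r0 s hr0 (eps/2) ltac:(lra)) as [d1 [hd1 H1]].
  assert (hx : exists x, E x /\ s - d1 < x).
  { destruct (Classical_Prop.classic (exists x, E x /\ s - d1 < x)) as [h|h]; auto.
    exfalso. assert (s <= s - d1); [|lra]. apply hlub. intros x hx.
    destruct (Rle_dec x (s - d1)); auto. exfalso; apply h; exists x; split; auto; lra. }
  destruct hx as [x [[hxr [dx [hdx Hx]]] hxs]].
  assert (hxs' : x <= s) by (apply hub; split; auto; exists dx; auto).
  set (z := Rmin d (s + d1/2)).
  assert (Ez : E z).
  { split. unfold z; split. apply Rmin_glb; lra. apply Rmin_l.
    exists (Rmin dx d1); split. apply Rmin_pos; auto.
    intros r hr hrr t ht.
    assert (hrr1 : Rabs (r - r0) < dx) by (eapply Rlt_le_trans; [exact hrr| apply Rmin_l]).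
    assert (hrr2 : Rabs (r - r0) < d1) by (eapply Rlt_le_trans; [exact hrr| apply Rmin_r]).
    destruct (Rle_dec t x). apply Hx; auto; lra.
    assert (hz : z <= s + d1/2) by apply Rmin_r.
    assert (hts : Rabs (t - s) < d1) by (unfold Rabs; destruct Rcase_abs; lra).
    assert (A1 := H1 r t hr hrr2 hts).
    assert (A2 := H1 r0 t hr0 ltac:(rewrite Rminus_diag, Rabs_R0; auto) hts).
    replace (f r t - f r0 t) with ((f r t - f r0 s) - (f r0 t - f r0 s)) by ring.
    eapply Rle_lt_trans. apply Rabs_triang. rewrite Rabs_Ropp. lra. }
  assert (hzs : z <= s) by (apply hub; auto).
  assert (hsd' : s = d).
  { destruct (Rle_dec d (s + d1/2)). unfold z in hzs; rewrite Rmin_left in hzs; lra.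
    unfold z in hzs; rewrite Rmin_right in hzs; lra. }
  assert (hz : z = d) by (unfold z; rewrite Rmin_left; lra).
  rewrite hz in Ez. destruct Ez as [_ [del [hdel H]]]. exists del; split; auto.
Qed.

Lemma cont_ex_RInt (g : R -> R) a b : (forall t, continuity_pt g t) -> ex_RInt g a b.
Proof. intros h. apply (@ex_RInt_continuous R_CompleteNormedModule). intros; apply continuity_pt_filterlim; auto. Qed.

Lemma RInt_extR (f g : R -> R) a b : (forall x, Rmin a b < x < Rmax a b -> f x = g x) ->
  RInt f a b = RInt g a b.
Proof. intros; apply RInt_ext; auto. Qed.

Lemma ex_RInt_extR (f g : R -> R) a b : (forall x, Rmin a b < x < Rmax a b -> f x = g x) ->
  ex_RInt f a b -> ex_RInt g a b.
Proof. intros; eapply ex_RInt_ext; eauto. Qed.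

Lemma ex_RInt_lin (f g : R -> R) a b al be : ex_RInt f a b -> ex_RInt g a b ->
  ex_RInt (fun t => al * f t + be * g t) a b.
Proof. intros hf hg. exact (ex_RInt_plus _ _ _ _ (ex_RInt_scal _ _ _ al hf) (ex_RInt_scal _ _ _ be hg)). Qed.

Lemma RInt_lin (f g : R -> R) a b al be : ex_RInt f a b -> ex_RInt g a b ->
  RInt (fun t => al * f t + be * g t) a b = al * RInt f a b + be * RInt g a b.
Proof.
  intros hf hg.
  assert (E := RInt_plus (fun t => scal al (f t)) (fun t => scal be (g t)) a b
    (ex_RInt_scal _ _ _ _ hf) (ex_RInt_scal _ _ _ _ hg)).
  rewrite (RInt_scal f), (RInt_scal g) in E by auto. exact E.
Qed.

Lemma RInt_lin1 (f : R -> R) a b al : ex_RInt f a b ->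
  RInt (fun t => al * f t) a b = al * RInt f a b.
Proof. intros hf. exact (RInt_scal f a b al hf). Qed.

Lemma RInt_add (f g : R -> R) a b : ex_RInt f a b -> ex_RInt g a b ->
  RInt (fun t => f t + g t) a b = RInt f a b + RInt g a b.
Proof. intros hf hg. exact (RInt_plus f g a b hf hg). Qed.

Lemma RInt_zero a b : RInt (fun _ => 0) a b = 0.
Proof. rewrite RInt_const. unfold scal; simpl; unfold mult; simpl; ring. Qed.

Lemma int_cont a b (G : R -> R -> R) (w : R -> R) c d : c <= d ->
  cont_strip a b G -> (forall r t, a <= r <= b -> continuity_pt (G r) t) ->
  (forall t, continuity_pt w t) -> (forall t, Rabs (w t) <= 1) ->
  forall r0, a <= r0 <= b -> cont_in a b (fun r => RInt (fun t => G r t * w t) c d) r0.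
Proof.
  intros hcd hG hGt hw hw1 r0 hr0 eps heps.
  destruct (UC a b G hG r0 hr0 c d hcd (eps / (d - c + 1))) as [del [hdel H]].
  { apply Rdiv_lt_0_compat; lra. }
  exists del; split; auto. intros r hr hrr.
  assert (ex1 : forall r, a <= r <= b -> ex_RInt (fun t => G r t * w t) c d).
  { intros; apply cont_ex_RInt; intros; apply continuity_pt_mult; auto. }
  assert (Ed : RInt (fun t => (G r t - G r0 t) * w t) c d =
     RInt (fun t => G r t * w t) c d - RInt (fun t => G r0 t * w t) c d).
  { replace (RInt (fun t => G r t * w t) c d - RInt (fun t => G r0 t * w t) c d)
     with (1 * RInt (fun t => G r t * w t) c d + (-1) * RInt (fun t => G r0 t * w t) c d) by ring.
    rewrite <- RInt_lin; auto. apply RInt_extR; intros; ring. }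
  rewrite <- Ed.
  eapply Rle_lt_trans. apply abs_RInt_le_const with (M := eps / (d - c + 1)); auto.
  { apply (ex_RInt_extR (fun t => 1 * (G r t * w t) + (-1) * (G r0 t * w t))).
    intros; ring. apply ex_RInt_lin; auto. }
  { intros t ht. rewrite Rabs_mult. specialize (H r hr hrr t ht).
    specialize (hw1 t). pose proof (Rabs_pos (G r t - G r0 t)). pose proof (Rabs_pos (w t)). nra. }
  assert (hk: eps / (d-c+1) * (d-c+1) = eps) by (field; lra).
  assert (0 < eps/(d-c+1)) by (apply Rdiv_lt_0_compat; lra). nra.
Qed.

Lemma RInt_lin3 (f g k : R -> R) a b al be ga : ex_RInt f a b -> ex_RInt g a b -> ex_RInt k a b ->
  RInt (fun t => al * f t + be * g t + ga * k t) a b = al * RInt f a b + be * RInt g a b + ga * RInt k a b.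
Proof.
  intros hf hg hk.
  rewrite <- (RInt_lin f g a b al be hf hg).
  rewrite <- (Rmult_1_l (RInt (fun t => al * f t + be * g t) a b)).
  rewrite <- (RInt_lin _ k a b 1 ga); auto. apply RInt_extR; intros; ring.
  apply ex_RInt_lin; auto.
Qed.

Lemma ex_RInt_lin3 (f g k : R -> R) a b al be ga : ex_RInt f a b -> ex_RInt g a b -> ex_RInt k a b ->
  ex_RInt (fun t => al * f t + be * g t + ga * k t) a b.
Proof.
  intros hf hg hk.
  apply (ex_RInt_extR (fun t => 1 * (al * f t + be * g t) + ga * k t)). intros; ring.
  apply ex_RInt_lin; auto. apply ex_RInt_lin; auto.
Qed.

Lemma mvt_quot (f df : R -> R) r h : h <> 0 ->
  (forall s, Rmin r (r+h) <= s <= Rmax r (r+h) -> derivable_pt_lim f s (df s)) ->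
  exists xi, Rabs (xi - r) < Rabs h /\ (f (r + h) - f r) / h = df xi.
Proof.
  intros hh hd. destruct (Rle_dec 0 h).
  - assert (hp : 0 < h) by lra.
    destruct (MVT_cor2 f df r (r+h) ltac:(lra)) as [xi [E hxi]].
    { intros c hc; apply hd. rewrite Rmin_left, Rmax_right by lra. auto. }
    exists xi; split. rewrite !Rabs_right; lra. replace (r + h - r) with h in E by ring.
    rewrite E; field; auto.
  - destruct (MVT_cor2 f df (r+h) r ltac:(lra)) as [xi [E hxi]].
    { intros c hc; apply hd. rewrite Rmin_right, Rmax_left by lra. auto. }
    exists xi; split. rewrite Rabs_left, Rabs_left1; lra. replace (r - (r + h)) with (-h) in E by ring.
    replace (f (r + h) - f r) with (- (f r - f (r + h))) by ring. rewrite E; field; auto.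
Qed.

Lemma int_deriv a b (F0 F1 : R -> R -> R) (w : R -> R) c d : c <= d ->
  (forall r t, a < r < b -> derivable_pt_lim (fun s => F0 s t) r (F1 r t)) ->
  cont_strip a b F1 -> (forall r t, a <= r <= b -> continuity_pt (F0 r) t) ->
  (forall r t, a <= r <= b -> continuity_pt (F1 r) t) ->
  (forall t, continuity_pt w t) -> (forall t, Rabs (w t) <= 1) ->
  forall r, a < r < b -> derivable_pt_lim (fun s => RInt (fun t => F0 s t * w t) c d) r
     (RInt (fun t => F1 r t * w t) c d).
Proof.
  intros hcd hd hF1 hF0t hF1t hw hw1 r hr eps heps.
  set (e' := eps / (2 * (d - c + 1))).
  assert (he' : 0 < e') by (unfold e'; apply Rdiv_lt_0_compat; lra).
  destruct (UC a b F1 hF1 r ltac:(lra) c d hcd e' he') as [del [hdel H]].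
  assert (hp : 0 < Rmin del (Rmin (r - a) (b - r))) by (apply Rmin_pos; [lra|apply Rmin_pos; lra]).
  exists (mkposreal _ hp). intros h hh hlt. simpl in hlt.
  assert (h1 : Rabs h < del) by (eapply Rlt_le_trans; [exact hlt| apply Rmin_l]).
  assert (h2 : Rabs h < r - a) by (eapply Rlt_le_trans; [exact hlt|]; eapply Rle_trans; [apply Rmin_r| apply Rmin_l]).
  assert (h3 : Rabs h < b - r) by (eapply Rlt_le_trans; [exact hlt|]; eapply Rle_trans; [apply Rmin_r| apply Rmin_r]).
  assert (hrh : a <= r + h <= b) by (revert h2 h3; unfold Rabs; destruct Rcase_abs; intros; lra).
  assert (hr' : a <= r <= b) by lra.
  assert (ex0 : forall s, a <= s <= b -> ex_RInt (fun t => F0 s t * w t) c d).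
  { intros; apply cont_ex_RInt; intros; apply continuity_pt_mult; auto. }
  assert (ex1 : forall s, a <= s <= b -> ex_RInt (fun t => F1 s t * w t) c d).
  { intros; apply cont_ex_RInt; intros; apply continuity_pt_mult; auto. }
  assert (Ed : (RInt (fun t => F0 (r + h) t * w t) c d - RInt (fun t => F0 r t * w t) c d) / h
               - RInt (fun t => F1 r t * w t) c d
             = RInt (fun t => ((F0 (r + h) t - F0 r t) / h - F1 r t) * w t) c d).
  { rewrite (RInt_extR (fun t => ((F0 (r + h) t - F0 r t) / h - F1 r t) * w t)
      (fun t => (/h) * (F0 (r + h) t * w t) + (- / h) * (F0 r t * w t) + (-1) * (F1 r t * w t))).
    rewrite RInt_lin3; auto. field; auto. intros; field; auto. }
  rewrite Ed.
  eapply Rle_lt_trans. apply abs_RInt_le_const with (M := e'). exact hcd.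
  { apply (ex_RInt_extR (fun t => (/h) * (F0 (r + h) t * w t) + (- / h) * (F0 r t * w t) + (-1) * (F1 r t * w t))).
    intros; field; auto. apply ex_RInt_lin3; auto. }
  { intros t ht. rewrite Rabs_mult.
    destruct (mvt_quot (fun s => F0 s t) (fun s => F1 s t) r h hh) as [xi [hxi E]].
    { intros s hs. apply hd.
      assert (Rmin r (r + h) >= r - Rabs h) by (unfold Rmin, Rabs; destruct Rle_dec; destruct Rcase_abs; lra).
      assert (Rmax r (r + h) <= r + Rabs h) by (unfold Rmax, Rabs; destruct Rle_dec; destruct Rcase_abs; lra).
      lra. }
    rewrite E. assert (hxr : a <= xi <= b) by (revert hxi; unfold Rabs at 1; destruct Rcase_abs; intros; lra).
    specialize (H xi hxr ltac:(lra) t ht). specialize (hw1 t).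
    pose proof (Rabs_pos (F1 xi t - F1 r t)). pose proof (Rabs_pos (w t)).
    apply Rlt_le in H. apply Rle_trans with (e' * 1). apply Rmult_le_compat; auto. lra. }
  assert (hk: e' * (2 * (d-c+1)) = eps) by (unfold e'; field; lra).
  assert (0 <= d - c) by lra. assert ((d - c) * e' <= (d - c + 1) * e') by (apply Rmult_le_compat_r; lra). lra.
Qed.

Lemma maxp a b (y y1 y2 p c : R -> R) : a < b ->
  (forall s, a <= s <= b -> cont_in a b y s) -> (forall s, a <= s <= b -> cont_in a b y1 s) ->
  (forall s, a <= s <= b -> cont_in a b y2 s) ->
  (forall s, a < s < b -> derivable_pt_lim y s (y1 s)) ->
  (forall s, a < s < b -> derivable_pt_lim y1 s (y2 s)) ->
  y1 a = 0 -> y b = 0 ->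
  (forall s, a <= s <= b -> y2 s = p s * y1 s + c s * y s) ->
  (forall s, a <= s <= b -> 0 < c s) ->
  forall s, a <= s <= b -> y s <= 0.
Proof.
  intros hab hy hy1 hy2 hd hd1 hya hyb hode hc s0 hs0.
  destruct (Rle_dec (y s0) 0) as [|hpos]; auto. exfalso.
  destruct (ext_val a b y ltac:(lra) hy) as [M [hM HM]].
  assert (hyM : y M > 0) by (specialize (HM s0 hs0); lra).
  assert (hMb : M < b) by (destruct (Req_dec M b); [subst; lra| lra]).
  assert (hy1M : y1 M = 0).
  { destruct (Req_dec M a). subst; auto.
    assert (a < M) by (destruct hM as [h _]; destruct h; [auto| congruence]).
    apply (fermat y M (y1 M) a b); auto; lra. }
  assert (hy2M : y2 M > 0).
  { rewrite hode by lra. rewrite hy1M. specialize (hc M hM). nra. }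
  destruct (hy2 M hM (y2 M) hy2M) as [del [hdel Hd]].
  set (eta := Rmin (del/2) ((b - M)/2)).
  assert (he : 0 < eta) by (apply Rmin_pos; lra).
  assert (he1 : eta <= del/2) by apply Rmin_l.
  assert (he2 : eta <= (b-M)/2) by apply Rmin_r.
  assert (pos2 : forall s, M <= s <= M + eta -> y2 s > 0).
  { intros s hs. specialize (Hd s ltac:(lra) ltac:(rewrite Rabs_right; lra)).
    revert Hd. unfold Rabs; destruct Rcase_abs; intros; lra. }
  destruct (mvt_in y y1 M (M + eta) ltac:(lra)) as [xi [hxi E1]].
  { intros s hs. apply (cont_in_sub a b); try lra. apply hy; lra. }
  { intros s hs. apply hd; lra. }
  destruct (mvt_in y1 y2 M xi ltac:(lra)) as [ze [hze E2]].
  { intros s hs. apply (cont_in_sub a b); try lra. apply hy1; lra. }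
  { intros s hs. apply hd1; lra. }
  specialize (pos2 ze ltac:(lra)).
  assert (y1 xi > 0) by nra.
  specialize (HM (M + eta) ltac:(lra)). nra.
Qed.

Lemma maxp0 a b (y y1 y2 p c : R -> R) : a < b ->
  (forall s, a <= s <= b -> cont_in a b y s) -> (forall s, a <= s <= b -> cont_in a b y1 s) ->
  (forall s, a <= s <= b -> cont_in a b y2 s) ->
  (forall s, a < s < b -> derivable_pt_lim y s (y1 s)) ->
  (forall s, a < s < b -> derivable_pt_lim y1 s (y2 s)) ->
  y1 a = 0 -> y b = 0 ->
  (forall s, a <= s <= b -> y2 s = p s * y1 s + c s * y s) ->
  (forall s, a <= s <= b -> 0 < c s) ->
  forall s, a <= s <= b -> y s = 0.
Proof.
  intros hab hy hy1 hy2 hd hd1 hya hyb hode hc s hs.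
  assert (h1 := maxp a b y y1 y2 p c hab hy hy1 hy2 hd hd1 hya hyb hode hc s hs).
  assert (h2 := maxp a b (fun s => - y s) (fun s => - y1 s) (fun s => - y2 s) p c hab).
  assert (- y s <= 0); [|lra]. apply h2; auto.
  - intros x hx eps he. destruct (hy x hx eps he) as [d [hd' H]]. exists d; split; auto.
    intros z hz hzx. replace (- y z - - y x) with (- (y z - y x)) by ring. rewrite Rabs_Ropp; auto.
  - intros x hx eps he. destruct (hy1 x hx eps he) as [d [hd' H]]. exists d; split; auto.
    intros z hz hzx. replace (- y1 z - - y1 x) with (- (y1 z - y1 x)) by ring. rewrite Rabs_Ropp; auto.
  - intros x hx eps he. destruct (hy2 x hx eps he) as [d [hd' H]]. exists d; split; auto.
    intros z hz hzx. replace (- y2 z - - y2 x) with (- (y2 z - y2 x)) by ring. rewrite Rabs_Ropp; auto.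
  - intros; apply derivable_pt_lim_opp; auto.
  - intros; apply derivable_pt_lim_opp; auto.
  - rewrite hya; ring.
  - rewrite hyb; ring.
  - intros x hx. rewrite hode; auto; ring.
Qed.

Lemma cont_clamp_id a b x : a <= b -> continuity_pt (clamp a b) x.
Proof.
  intros hab eps he. exists eps; split; auto. intros z [_ hz]. simpl in *. unfold R_dist in *.
  eapply Rle_lt_trans. apply clamp_lip; auto. auto.
Qed.

Lemma uniq a b (y y1 y2 p q : R -> R) K : a < b -> 0 <= K ->
  (forall s, a <= s <= b -> cont_in a b y s) -> (forall s, a <= s <= b -> cont_in a b y1 s) ->
  (forall s, a < s < b -> derivable_pt_lim y s (y1 s)) ->
  (forall s, a < s < b -> derivable_pt_lim y1 s (y2 s)) ->
  (forall s, a < s < b -> y2 s = p s * y1 s + q s * y s) ->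
  (forall s, a < s < b -> Rabs (p s) <= K /\ Rabs (q s) <= K) ->
  y a = 0 -> y1 a = 0 -> forall s, a <= s <= b -> y s = 0.
Proof.
  intros hab hK hy hy1 hd hd1 hode hpq hya hy1a s hs.
  set (C := 1 + 3 * K).
  set (G := fun s => (y s * y s + y1 s * y1 s) * exp (- C * s)).
  assert (hG : forall s, a <= s <= b -> cont_in a b G s).
  { intros x hx. apply clamp_cont_in; auto. unfold G.
    assert (h1 := cont_in_clamp a b y x ltac:(lra) hx (hy x hx)).
    assert (h2 := cont_in_clamp a b y1 x ltac:(lra) hx (hy1 x hx)).
    apply continuity_pt_mult. apply continuity_pt_plus; apply continuity_pt_mult; auto.
    apply (continuity_pt_comp (fun s => - C * clamp a b s) exp).
    apply continuity_pt_mult. apply continuity_pt_const; intros ? ?; auto. apply cont_clamp_id; lra.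
    apply derivable_continuous_pt, derivable_pt_exp. }
  assert (hGd : forall s, a < s < b -> derivable_pt_lim G s
     ((2 * y s * y1 s + 2 * y1 s * y2 s) * exp (- C * s) + (y s * y s + y1 s * y1 s) * (exp (- C * s) * (- C)))).
  { intros x hx.
    assert (he : derivable_pt_lim (fun s => exp (- C * s)) x (exp (- C * x) * (- C))).
    { apply is_derive_Reals. auto_derive; auto. ring. }
    assert (hyy := derivable_pt_lim_mult y y x _ _ (hd x hx) (hd x hx)).
    assert (hyy1 := derivable_pt_lim_mult y1 y1 x _ _ (hd1 x hx) (hd1 x hx)).
    assert (hs' := derivable_pt_lim_plus _ _ x _ _ hyy hyy1).
    assert (hm := derivable_pt_lim_mult _ _ x _ _ hs' he).
    unfold G. unfold mult_fct, plus_fct in hm.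
    replace ((2 * y x * y1 x + 2 * y1 x * y2 x) * exp (- C * x) + (y x * y x + y1 x * y1 x) * (exp (- C * x) * - C))
      with ((y1 x * y x + y x * y1 x + (y2 x * y1 x + y1 x * y2 x)) * exp (- C * x) +
            (y x * y x + y1 x * y1 x) * (exp (- C * x) * - C)) by ring.
    exact hm. }
  assert (hGa : G a = 0) by (unfold G; rewrite hya, hy1a; ring).
  destruct (Req_dec s a) as [->|hsa]; auto.
  assert (has : a < s) by (destruct hs as [h _]; destruct h; [auto|congruence]).
  destruct (mvt_in G (fun s => (2 * y s * y1 s + 2 * y1 s * y2 s) * exp (- C * s) + (y s * y s + y1 s * y1 s) * (exp (- C * s) * (- C))) a s has) as [c [hc E]].
  { intros x hx. apply (cont_in_sub a b); try lra. apply hG; lra. }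
  { intros x hx. apply hGd; lra. }
  assert (hder : (2 * y c * y1 c + 2 * y1 c * y2 c) * exp (- C * c)
      + (y c * y c + y1 c * y1 c) * (exp (- C * c) * (- C)) <= 0).
  { rewrite hode by lra. destruct (hpq c ltac:(lra)) as [hp hq].
    assert (hex := exp_pos (- C * c)).
    set (Y := y c) in *. set (Y1 := y1 c) in *. set (P := p c) in *. set (Q := q c) in *.
    set (X := exp (- C * c)) in *.
    assert (hP : - K <= P <= K) by (revert hp; unfold Rabs; destruct Rcase_abs; intros; lra).
    assert (hQ : - K <= Q <= K) by (revert hq; unfold Rabs; destruct Rcase_abs; intros; lra).
    assert (2 * Y * Y1 + 2 * Y1 * (P * Y1 + Q * Y) <= C * (Y * Y + Y1 * Y1)).
    { unfold C.
      assert (2 * Y * Y1 <= Y * Y + Y1 * Y1) by (pose proof (Rle_0_sqr (Y - Y1)); unfold Rsqr in *; nra).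
      assert (h0 : 0 <= Y1 * Y1) by (apply Rle_0_sqr).
      assert (0 <= (K - P) * (Y1*Y1)) by (apply Rmult_le_pos; lra).
      assert (2 * Q * (Y * Y1) <= K * (Y * Y + Y1 * Y1)).
      { destruct (Rle_dec 0 (Y * Y1)).
        - assert (2 * (Y * Y1) <= Y * Y + Y1 * Y1) by (pose proof (Rle_0_sqr (Y - Y1)); unfold Rsqr in *; nra).
          assert (0 <= (K - Q) * (Y*Y1)) by (apply Rmult_le_pos; lra). nra.
        - assert (- 2 * (Y * Y1) <= Y * Y + Y1 * Y1) by (pose proof (Rle_0_sqr (Y + Y1)); unfold Rsqr in *; nra).
          assert (0 <= (K + Q) * (-(Y*Y1))) by (apply Rmult_le_pos; lra). nra. }
      nra. }
    nra. }
  assert (hGs : G s <= 0) by nra.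
  unfold G in hGs. assert (hex := exp_pos (- C * s)).
  assert (y s * y s + y1 s * y1 s <= 0) by nra. nra.
Qed.

Lemma per_deriv (f f1 : R -> R) T : (forall t, f (t + T) = f t) ->
  (forall t, derivable_pt_lim f t (f1 t)) -> forall t, f1 (t + T) = f1 t.
Proof.
  intros hp hd t. apply (uniqueness_limite f t); auto.
  intros eps he. destruct (hd (t + T) eps he) as [d H]. exists d. intros h hh hlt.
  specialize (H h hh hlt). replace (t + T + h) with ((t + h) + T) in H by ring.
  rewrite !hp in H. exact H.
Qed.

Lemma dcos k x : derivable_pt_lim (fun t => cos (k * t)) x (- (k * sin (k * x))).
Proof. apply is_derive_Reals. auto_derive; auto. ring. Qed.
Lemma dsin k x : derivable_pt_lim (fun t => sin (k * t)) x (k * cos (k * x)).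
Proof. apply is_derive_Reals. auto_derive; auto. ring. Qed.

Lemma cont_cos k t : continuity_pt (fun t => cos (k * t)) t.
Proof. apply derivable_continuous_pt. exists (- (k * sin (k * t))). apply dcos. Qed.
Lemma cont_sin k t : continuity_pt (fun t => sin (k * t)) t.
Proof. apply derivable_continuous_pt. exists (k * cos (k * t)). apply dsin. Qed.

Lemma cos2k (k : nat) : cos (INR k * (2 * PI)) = 1.
Proof. replace (INR k * (2 * PI)) with (0 + 2 * INR k * PI) by ring. rewrite cos_period; apply cos_0. Qed.
Lemma sin2k (k : nat) : sin (INR k * (2 * PI)) = 0.
Proof. replace (INR k * (2 * PI)) with (0 + 2 * INR k * PI) by ring. rewrite sin_period; apply sin_0. Qed.

Lemma cmul (f g : R -> R) x : continuity_pt f x -> continuity_pt g x -> continuity_pt (fun t => f t * g t) x.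
Proof. intros; apply (continuity_pt_mult f g); auto. Qed.
Lemma cadd (f g : R -> R) x : continuity_pt f x -> continuity_pt g x -> continuity_pt (fun t => f t + g t) x.
Proof. intros; apply (continuity_pt_plus f g); auto. Qed.
Lemma ckm (f : R -> R) k x : continuity_pt f x -> continuity_pt (fun t => k * f t) x.
Proof. intros; apply (continuity_pt_scal f); auto. Qed.

Lemma dprod (f g : R -> R) x lf lg : derivable_pt_lim f x lf -> derivable_pt_lim g x lg ->
  derivable_pt_lim (fun t => f t * g t) x (lf * g x + f x * lg).
Proof. intros h1 h2. exact (derivable_pt_lim_mult f g x lf lg h1 h2). Qed.

Lemma dsum (f g : R -> R) x lf lg k : derivable_pt_lim f x lf -> derivable_pt_lim g x lg ->
  derivable_pt_lim (fun t => f t + k * g t) x (lf + k * lg).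
Proof.
  intros h1 h2. apply (derivable_pt_lim_plus f (fun t => k * g t)). exact h1.
  exact (derivable_pt_lim_scal g k x lg h2).
Qed.

Lemma ibp (f0 f1 f2 : R -> R) (k : nat) :
  (forall t, derivable_pt_lim f0 t (f1 t)) -> (forall t, derivable_pt_lim f1 t (f2 t)) ->
  (forall t, continuity_pt f2 t) ->
  (forall t, f0 (t + 2 * PI) = f0 t) ->
  RInt (fun t => f2 t * cos (INR k * t)) 0 (2 * PI) = - (INR k) ^ 2 * RInt (fun t => f0 t * cos (INR k * t)) 0 (2 * PI)
  /\ RInt (fun t => f2 t * sin (INR k * t)) 0 (2 * PI) = - (INR k) ^ 2 * RInt (fun t => f0 t * sin (INR k * t)) 0 (2 * PI).
Proof.
  intros h0 h1 h2 hp.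
  assert (hp1 := per_deriv f0 f1 (2 * PI) hp h0).
  assert (c0 : forall t, continuity_pt f0 t) by (intros; apply derivable_continuous_pt; exists (f1 t); exact (h0 t)).
  set (K := INR k).
  assert (exc : forall g : R -> R, (forall t, continuity_pt g t) -> ex_RInt (fun t => g t * cos (K * t)) 0 (2 * PI)).
  { intros g hg; apply cont_ex_RInt; intros; apply continuity_pt_mult; auto; apply cont_cos. }
  assert (exs : forall g : R -> R, (forall t, continuity_pt g t) -> ex_RInt (fun t => g t * sin (K * t)) 0 (2 * PI)).
  { intros g hg; apply cont_ex_RInt; intros; apply continuity_pt_mult; auto; apply cont_sin. }
  split.
  - set (P := fun t => f1 t * cos (K * t) + K * (f0 t * sin (K * t))).
    set (df := fun t => 1 * (f2 t * cos (K * t)) + K ^ 2 * (f0 t * cos (K * t))).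
    assert (hd : forall x, is_derive P x (df x)).
    { intros x. apply is_derive_Reals.
      assert (H := dsum _ _ x _ _ K (dprod _ _ x _ _ (h1 x) (dcos K x)) (dprod _ _ x _ _ (h0 x) (dsin K x))).
      unfold P, df. replace (1 * (f2 x * cos (K * x)) + K ^ 2 * (f0 x * cos (K * x))) with
        (f2 x * cos (K * x) + f1 x * - (K * sin (K * x)) + K * (f1 x * sin (K * x) + f0 x * (K * cos (K * x)))) by ring.
      exact H. }
    assert (hi := is_RInt_derive P df 0 (2 * PI) (fun x _ => hd x)).
    assert (hc : forall x, continuity_pt df x).
    { intros x. unfold df. apply cadd; apply ckm; apply cmul; auto; apply cont_cos. }
    specialize (hi (fun x _ => proj1 (continuity_pt_filterlim _ _) (hc x))).
    apply is_RInt_unique in hi. unfold df in hi. rewrite RInt_lin in hi by (apply exc; auto).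
    unfold P in hi. unfold minus, plus, opp in hi; simpl in hi.
    unfold K in hi. rewrite cos2k, sin2k in hi.
    assert (e1 : f1 (2 * PI) = f1 0) by (rewrite <- (hp1 0); f_equal; ring).
    rewrite e1 in hi. replace (INR k * 0) with 0 in hi by ring. rewrite cos_0, sin_0 in hi.
    fold K in hi |- *. replace (K ^ 2) with (K * (K * 1)) by ring. ring_simplify in hi. lra.
  - set (P := fun t => f1 t * sin (K * t) + (- K) * (f0 t * cos (K * t))).
    set (df := fun t => 1 * (f2 t * sin (K * t)) + K ^ 2 * (f0 t * sin (K * t))).
    assert (hd : forall x, is_derive P x (df x)).
    { intros x. apply is_derive_Reals.
      assert (H := dsum _ _ x _ _ (-K) (dprod _ _ x _ _ (h1 x) (dsin K x)) (dprod _ _ x _ _ (h0 x) (dcos K x))).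
      unfold P, df. replace (1 * (f2 x * sin (K * x)) + K ^ 2 * (f0 x * sin (K * x))) with
        (f2 x * sin (K * x) + f1 x * (K * cos (K * x)) + - K * (f1 x * cos (K * x) + f0 x * - (K * sin (K * x)))) by ring.
      exact H. }
    assert (hi := is_RInt_derive P df 0 (2 * PI) (fun x _ => hd x)).
    assert (hc : forall x, continuity_pt df x).
    { intros x. unfold df. apply cadd; apply ckm; apply cmul; auto; apply cont_sin. }
    specialize (hi (fun x _ => proj1 (continuity_pt_filterlim _ _) (hc x))).
    apply is_RInt_unique in hi. unfold df in hi. rewrite RInt_lin in hi by (apply exs; auto).
    unfold P in hi. unfold minus, plus, opp in hi; simpl in hi.
    unfold K in hi. rewrite cos2k, sin2k in hi.
    assert (e1 : f1 (2 * PI) = f1 0) by (rewrite <- (hp1 0); f_equal; ring).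
    assert (e0 : f0 (2 * PI) = f0 0) by (rewrite <- (hp 0); f_equal; ring).
    rewrite e1, e0 in hi. replace (INR k * 0) with 0 in hi by ring. rewrite cos_0, sin_0 in hi.
    fold K in hi |- *. replace (K ^ 2) with (K * (K * 1)) by ring. ring_simplify in hi. lra.
Qed.

Lemma nat_big (B : R) : exists n : nat, B < INR n.
Proof.
  destruct (archimed B) as [h1 h2].
  destruct (Z_lt_le_dec (up B) 0) as [hz|hz].
  - exists 0%nat. simpl. apply IZR_lt in hz. lra.
  - exists (Z.to_nat (up B)). rewrite INR_IZR_INZ, Z2Nat.id; auto.
Qed.

Lemma bernoulli (d : R) (n : nat) : 0 <= d -> 1 + INR n * d <= (1 + d) ^ n.
Proof.
  intros hd. induction n. simpl; lra.
  rewrite S_INR. simpl. assert (0 <= INR n) by apply pos_INR.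
  assert (1 <= (1 + d) ^ n) by (apply pow_R1_Rle; lra). nra.
Qed.

Ltac toR := match goal with |- @eq _ ?a ?b => change (@eq R a b) end.

Definition Kf (s : R) := (1 + cos s) / 2.

Lemma cos_abs s : cos s = cos (Rabs s).
Proof. unfold Rabs; destruct Rcase_abs; auto. rewrite cos_neg; auto. Qed.

Lemma cos_le_far eta s : 0 < eta < PI -> eta <= Rabs s <= PI -> cos s <= cos eta.
Proof.
  intros he hs. rewrite (cos_abs s). destruct (Req_dec eta (Rabs s)) as [<-|hne]. lra.
  apply Rlt_le, cos_decreasing_1; lra.
Qed.

Lemma cos_ge_near eta s : 0 < eta < PI -> Rabs s <= eta -> cos eta <= cos s.
Proof.
  intros he hs. rewrite (cos_abs s). destruct (Req_dec eta (Rabs s)) as [<-|hne]. lra.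
  apply Rlt_le, cos_decreasing_1; try lra. apply Rabs_pos.
Qed.

Lemma Kf_nonneg s : 0 <= Kf s.
Proof. unfold Kf. pose proof (COS_bound s). lra. Qed.

Lemma cont_ker x0 n c t : continuity_pt (fun t => Kf (x0 - t) ^ n * cos (c * (x0 - t))) t.
Proof. apply (proj2 (continuity_pt_filterlim _ _)). change (continuous (fun t => Kf (x0 - t) ^ n * cos (c * (x0 - t))) t). apply (ex_derive_continuous (K:=R_AbsRing) (V:=R_NormedModule)). unfold Kf. auto_derive; auto. Qed.

Lemma per_shift (f : R -> R) c : (forall t, continuity_pt f t) -> (forall t, f (t + 2 * PI) = f t) ->
  RInt f 0 (2 * PI) = RInt f c (c + 2 * PI).
Proof.
  intros hc hp.
  assert (ex : forall u v, ex_RInt f u v) by (intros; apply cont_ex_RInt; auto).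
  assert (E1 := RInt_Chasles f c (2 * PI) (c + 2 * PI) (ex _ _) (ex _ _)).
  assert (E2 := RInt_Chasles f 0 c (2 * PI) (ex _ _) (ex _ _)).
  assert (E3 := RInt_comp_lin f 1 (2 * PI) 0 c).
  replace (1 * 0 + 2 * PI) with (2 * PI) in E3 by ring.
  replace (1 * c + 2 * PI) with (c + 2 * PI) in E3 by ring.
  specialize (E3 (ex _ _)).
  assert (E4 : RInt f (2 * PI) (c + 2 * PI) = RInt f 0 c).
  { rewrite <- E3. apply RInt_ext. intros x _. change (1 * f (1 * x + 2 * PI) = f x).
    replace (1 * x + 2 * PI) with (x + 2 * PI) by ring. rewrite hp; ring. }
  unfold plus in E1, E2; simpl in E1, E2. rewrite <- E1, <- E2, E4. apply Rplus_comm.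
Qed.

Lemma cos_prod J s : cos s * cos (J * s) = (cos ((J + 1) * s) + cos ((J - 1) * s)) / 2.
Proof.
  replace ((J + 1) * s) with (J * s + s) by ring. replace ((J - 1) * s) with (J * s - s) by ring.
  rewrite cos_plus, cos_minus. field.
Qed.

Lemma Zker (h : R -> R) : (forall t, continuity_pt h t) -> RInt h 0 (2 * PI) = 0 ->
  (forall k : nat, (1 <= k)%nat -> RInt (fun t => h t * cos (INR k * t)) 0 (2 * PI) = 0 /\
                          RInt (fun t => h t * sin (INR k * t)) 0 (2 * PI) = 0) ->
  forall x0 n j, RInt (fun t => h t * (Kf (x0 - t) ^ n * cos (INR j * (x0 - t)))) 0 (2 * PI) = 0.
Proof.
  intros hc h0 hk x0 n.
  assert (ex : forall n c, ex_RInt (fun t => h t * (Kf (x0 - t) ^ n * cos (c * (x0 - t)))) 0 (2 * PI)).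
  { intros; apply cont_ex_RInt; intros; apply cmul; auto; apply cont_ker. }
  induction n; intros j.
  - destruct j.
    + transitivity (RInt h 0 (2 * PI)); [|exact h0]. apply RInt_extR. intros. simpl pow. rewrite Rmult_0_l, cos_0. ring.
    + destruct (hk (S j) ltac:(lia)) as [e1 e2].
      rewrite (RInt_extR _ (fun t => cos (INR (S j) * x0) * (h t * cos (INR (S j) * t)) +
                                      sin (INR (S j) * x0) * (h t * sin (INR (S j) * t)))).
      rewrite RInt_lin. rewrite e1, e2, !Rmult_0_r, Rplus_0_r. reflexivity.
      apply cont_ex_RInt; intros; apply cmul; auto; apply cont_cos.
      apply cont_ex_RInt; intros; apply cmul; auto; apply cont_sin.
      intros t _. simpl pow. replace (INR (S j) * (x0 - t)) with (INR (S j) * x0 - INR (S j) * t) by ring.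
      rewrite cos_minus. ring.
  - destruct j.
    + rewrite (RInt_extR _ (fun t => / 2 * (h t * (Kf (x0 - t) ^ n * cos (INR 0 * (x0 - t)))) +
                                  / 2 * (h t * (Kf (x0 - t) ^ n * cos (INR 1 * (x0 - t)))))).
      rewrite RInt_lin by apply ex. rewrite !IHn. toR; ring.
      intros t _. simpl pow. simpl INR. toR. rewrite Rmult_0_l, Rmult_1_l, cos_0. unfold Kf. field.
    + rewrite (RInt_extR _ (fun t => / 2 * (h t * (Kf (x0 - t) ^ n * cos (INR (S j) * (x0 - t)))) +
                                  / 4 * (h t * (Kf (x0 - t) ^ n * cos (INR (S (S j)) * (x0 - t)))) +
                                  / 4 * (h t * (Kf (x0 - t) ^ n * cos (INR j * (x0 - t)))))).
      rewrite RInt_lin3 by apply ex. rewrite !IHn. toR; ring.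
      intros t _. simpl pow.
      assert (E := cos_prod (INR (S j)) (x0 - t)).
      replace (INR (S j) + 1) with (INR (S (S j))) in E by (rewrite (S_INR (S j)); ring).
      replace (INR (S j) - 1) with (INR j) in E by (rewrite S_INR; ring).
      toR. unfold Kf.
      replace (cos (INR (S (S j)) * (x0 - t))) with (2 * (cos (x0 - t) * cos (INR (S j) * (x0 - t))) - cos (INR j * (x0 - t))) by lra.
      field.
Qed.

Lemma cont_kn x0 n t : continuity_pt (fun t => Kf (x0 - t) ^ n) t.
Proof. apply (proj2 (continuity_pt_filterlim _ _)). change (continuous (fun t => Kf (x0 - t) ^ n) t).
  apply (ex_derive_continuous (K:=R_AbsRing) (V:=R_NormedModule)). unfold Kf. auto_derive; auto. Qed.

Lemma chasles3 (f : R -> R) a b c : (forall t, continuity_pt f t) ->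
  RInt f a c = RInt f a b + RInt f b c.
Proof.
  intros hc. assert (ex : forall u v, ex_RInt f u v) by (intros; apply cont_ex_RInt; auto).
  rewrite <- (RInt_Chasles f a b c (ex _ _) (ex _ _)). reflexivity.
Qed.

Lemma conc (h : R -> R) x0 : (forall t, continuity_pt h t) -> (forall t, h (t + 2 * PI) = h t) ->
  (forall n, RInt (fun t => h t * Kf (x0 - t) ^ n) 0 (2 * PI) = 0) -> h x0 <= 0.
Proof.
  intros hc hp hz. destruct (Rle_dec (h x0) 0) as [|hpos0]; auto. exfalso.
  set (d0 := h x0 / 2).
  destruct (hc x0 d0 ltac:(unfold d0; lra)) as [alp [halp Ha]].
  assert (hpos : forall t, Rabs (t - x0) < alp -> h t > d0).
  { intros t ht. destruct (Req_dec t x0) as [->|hne]. unfold d0; lra.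
    specialize (Ha t (conj (conj I (not_eq_sym hne)) ht)). simpl in Ha. unfold R_dist in Ha.
    revert Ha; unfold Rabs; destruct Rcase_abs; unfold d0; intros; lra. }
  pose proof PI_RGT_0 as hPI.
  set (eta := Rmin (alp/2) (PI/2)).
  assert (he : 0 < eta) by (apply Rmin_pos; lra).
  assert (he1 : eta <= alp/2) by apply Rmin_l.
  assert (he2 : eta <= PI/2) by apply Rmin_r.
  set (A := x0 - PI).
  destruct (continuity_ab_maj (fun t => Rabs (h t)) A (x0 + PI)) as [Mx [HM _]].
  { unfold A; lra. }
  { intros; apply (continuity_pt_comp h Rabs); auto. apply Rcontinuity_abs. }
  set (M := Rabs (h Mx)). assert (hM0 : 0 <= M) by apply Rabs_pos.
  set (q1 := Kf (eta / 2)). set (q2 := Kf eta).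
  assert (hq2 : 0 < q2) by (unfold q2, Kf; pose proof (cos_ge_near eta 0 ltac:(lra)); rewrite Rabs_R0 in H; 
     assert (0 <= cos eta) by (apply cos_ge_0; lra); lra).
  assert (hq12 : q2 < q1).
  { unfold q1, q2, Kf. assert (cos eta < cos (eta/2)) by (apply cos_decreasing_1; lra). lra. }
  set (phi := fun n t => h t * Kf (x0 - t) ^ n).
  assert (cphi : forall n t, continuity_pt (phi n) t) by (intros; apply cmul; auto; apply cont_kn).
  assert (Kper : forall t, Kf (x0 - (t + 2 * PI)) = Kf (x0 - t)).
  { intros t. unfold Kf. f_equal. f_equal. rewrite <- (cos_period (x0 - (t + 2 * PI)) 1). f_equal. simpl; ring. }
  assert (key : forall n, eta * d0 * q1 ^ n <= 2 * PI * M * q2 ^ n).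
  { intros n.
    assert (hI := hz n). fold (phi n) in hI.
    rewrite (per_shift (phi n) A (cphi n)) in hI.
    2: { intros t. unfold phi. rewrite hp, Kper. reflexivity. }
    replace (A + 2 * PI) with (x0 + PI) in hI by (unfold A; ring).
    rewrite (chasles3 _ A (x0 - eta) (x0 + PI) (cphi n)) in hI.
    rewrite (chasles3 _ (x0 - eta) (x0 - eta/2) (x0 + PI) (cphi n)) in hI.
    rewrite (chasles3 _ (x0 - eta/2) (x0 + eta/2) (x0 + PI) (cphi n)) in hI.
    rewrite (chasles3 _ (x0 + eta/2) (x0 + eta) (x0 + PI) (cphi n)) in hI.
    assert (ex : forall u v, ex_RInt (phi n) u v) by (intros; apply cont_ex_RInt; auto).
    assert (hq2n : 0 <= q2 ^ n) by (apply pow_le; lra).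
    assert (far : forall t, A <= t <= x0 + PI -> eta <= Rabs (x0 - t) -> Rabs (phi n t) <= M * q2 ^ n).
    { intros t ht hf. unfold phi. rewrite Rabs_mult. rewrite (Rabs_right (Kf (x0 - t) ^ n)).
      2: { apply Rle_ge, pow_le, Kf_nonneg. }
      apply Rmult_le_compat; auto. apply Rabs_pos. apply pow_le, Kf_nonneg.
      apply pow_incr. split. apply Kf_nonneg. unfold q2, Kf.
      assert (cos (x0 - t) <= cos eta); [|lra]. apply cos_le_far. lra.
      split; auto. unfold A in ht. unfold Rabs; destruct Rcase_abs; lra. }
    assert (I1 : RInt (phi n) A (x0 - eta) >= - (PI * (M * q2 ^ n))).
    { assert (hb := abs_RInt_le_const (phi n) A (x0 - eta) (M * q2 ^ n) ltac:(unfold A; lra) (ex _ _)).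
      assert (Rabs (RInt (phi n) A (x0 - eta)) <= (x0 - eta - A) * (M * q2 ^ n)).
      { apply hb. intros t ht. apply far. unfold A in *; lra. unfold Rabs; destruct Rcase_abs; lra. }
      assert ((x0 - eta - A) * (M * q2 ^ n) <= PI * (M * q2 ^ n)).
      { apply Rmult_le_compat_r. apply Rmult_le_pos; auto. unfold A; lra. }
      revert H; unfold Rabs; destruct Rcase_abs; intros; lra. }
    assert (I5 : RInt (phi n) (x0 + eta) (x0 + PI) >= - (PI * (M * q2 ^ n))).
    { assert (hb := abs_RInt_le_const (phi n) (x0 + eta) (x0 + PI) (M * q2 ^ n) ltac:(lra) (ex _ _)).
      assert (Rabs (RInt (phi n) (x0 + eta) (x0 + PI)) <= (x0 + PI - (x0 + eta)) * (M * q2 ^ n)).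
      { apply hb. intros t ht. apply far. unfold A in *; lra. unfold Rabs; destruct Rcase_abs; lra. }
      assert ((x0 + PI - (x0 + eta)) * (M * q2 ^ n) <= PI * (M * q2 ^ n)).
      { apply Rmult_le_compat_r. apply Rmult_le_pos; auto. lra. }
      revert H; unfold Rabs; destruct Rcase_abs; intros; lra. }
    assert (mid : forall t, Rabs (t - x0) < alp -> 0 <= phi n t).
    { intros t ht. unfold phi. apply Rmult_le_pos. specialize (hpos t ht). unfold d0 in hpos; lra.
      apply pow_le, Kf_nonneg. }
    assert (I2 : 0 <= RInt (phi n) (x0 - eta) (x0 - eta / 2)).
    { apply RInt_ge_0. lra. apply ex. intros t ht. apply mid. unfold Rabs; destruct Rcase_abs; lra. }
    assert (I4 : 0 <= RInt (phi n) (x0 + eta / 2) (x0 + eta)).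
    { apply RInt_ge_0. lra. apply ex. intros t ht. apply mid. unfold Rabs; destruct Rcase_abs; lra. }
    assert (I3 : eta * (d0 * q1 ^ n) <= RInt (phi n) (x0 - eta / 2) (x0 + eta / 2)).
    { assert (hc3 := RInt_le (fun _ => d0 * q1 ^ n) (phi n) (x0 - eta / 2) (x0 + eta / 2) ltac:(lra)).
      rewrite RInt_const in hc3. unfold scal in hc3; simpl in hc3; unfold mult in hc3; simpl in hc3.
      eapply Rle_trans; [|apply hc3]. apply Req_le. field.
      apply ex_RInt_const. apply ex.
      intros t ht. unfold phi. apply Rmult_le_compat.
      unfold d0; lra. apply pow_le; unfold q1; apply Kf_nonneg.
      apply Rlt_le, hpos. unfold Rabs; destruct Rcase_abs; lra.
      apply pow_incr. split. apply Kf_nonneg. unfold q1, Kf.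
      assert (cos (eta / 2) <= cos (x0 - t)); [|lra]. apply cos_ge_near. lra.
      unfold Rabs; destruct Rcase_abs; lra. }
    unfold plus in hI; simpl in hI. lra. }
  set (rho := q1 / q2).
  assert (hrho : 1 < rho) by (unfold rho; apply (Rmult_lt_reg_r q2); auto; unfold Rdiv; rewrite Rmult_assoc, Rinv_l; lra).
  assert (hq1 : forall n, q1 ^ n = rho ^ n * q2 ^ n).
  { intros n. rewrite <- Rpow_mult_distr. unfold rho. f_equal. field. lra. }
  assert (hd0 : 0 < d0) by (unfold d0; lra).
  destruct (nat_big (2 * PI * M / (eta * d0 * (rho - 1)))) as [n hn].
  specialize (key n). rewrite hq1 in key.
  assert (hb := bernoulli (rho - 1) n ltac:(lra)). replace (1 + (rho - 1)) with rho in hb by ring.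
  assert (hq2n : 0 < q2 ^ n) by (apply pow_lt; lra).
  assert (hed : 0 < eta * d0 * (rho - 1)) by (apply Rmult_lt_0_compat; [apply Rmult_lt_0_compat|]; lra).
  assert (hn' : 2 * PI * M < INR n * (eta * d0 * (rho - 1))).
  { apply (Rmult_lt_compat_r (eta * d0 * (rho - 1))) in hn; auto.
    unfold Rdiv in hn. rewrite Rmult_assoc, Rinv_l in hn; lra. }
  assert (eta * d0 * rho ^ n >= eta * d0 * (1 + INR n * (rho - 1))).
  { apply Rle_ge, Rmult_le_compat_l; auto. apply Rmult_le_pos; lra. }
  assert (2 * PI * M < eta * d0 * rho ^ n) by nra.
  assert (2 * PI * M * q2 ^ n < eta * d0 * rho ^ n * q2 ^ n) by (apply Rmult_lt_compat_r; auto).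
  lra.
Qed.

Lemma int_cos (k : nat) : (1 <= k)%nat -> RInt (fun t => cos (INR k * t)) 0 (2 * PI) = 0 /\
  RInt (fun t => sin (INR k * t)) 0 (2 * PI) = 0.
Proof.
  intros hk. assert (hK : INR k <> 0) by (apply not_0_INR; lia).
  split.
  - assert (hd : forall x, is_derive (fun t => sin (INR k * t) / INR k) x (cos (INR k * x))).
    { intros x. auto_derive; auto. field; auto. }
    assert (hi := is_RInt_derive _ _ 0 (2 * PI) (fun x _ => hd x)
      (fun x _ => proj1 (continuity_pt_filterlim _ _) (cont_cos (INR k) x))).
    apply is_RInt_unique in hi. rewrite hi. unfold minus, plus, opp; simpl.
    rewrite sin2k, Rmult_0_r, sin_0. toR. field; auto.
  - assert (hd : forall x, is_derive (fun t => - cos (INR k * t) / INR k) x (sin (INR k * x))).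
    { intros x. auto_derive; auto. field; auto. }
    assert (hi := is_RInt_derive _ _ 0 (2 * PI) (fun x _ => hd x)
      (fun x _ => proj1 (continuity_pt_filterlim _ _) (cont_sin (INR k) x))).
    apply is_RInt_unique in hi. rewrite hi. unfold minus, plus, opp; simpl.
    rewrite cos2k, Rmult_0_r, cos_0. toR. field; auto.
Qed.

Lemma complete (g : R -> R) : (forall t, continuity_pt g t) -> (forall t, g (t + 2 * PI) = g t) ->
  (forall k : nat, (1 <= k)%nat -> RInt (fun t => g t * cos (INR k * t)) 0 (2 * PI) = 0 /\
                          RInt (fun t => g t * sin (INR k * t)) 0 (2 * PI) = 0) ->
  forall t1 t2, g t1 = g t2.
Proof.
  intros hc hp hk.
  pose proof PI_RGT_0 as hPI.
  set (c := RInt g 0 (2 * PI) / (2 * PI)).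
  set (h := fun t => 1 * g t + (- c) * 1).
  assert (ch : forall t, continuity_pt h t).
  { intros; unfold h; apply cadd; apply ckm; auto. apply continuity_pt_const; intros ? ?; auto. }
  assert (ex1 : ex_RInt (fun _ : R => 1) 0 (2 * PI)) by apply ex_RInt_const.
  assert (exg : ex_RInt g 0 (2 * PI)) by (apply cont_ex_RInt; auto).
  assert (h0 : RInt h 0 (2 * PI) = 0).
  { unfold h. rewrite RInt_lin; auto. rewrite RInt_const. unfold scal; simpl; unfold mult; simpl.
    unfold c. field. lra. }
  assert (hkh : forall k : nat, (1 <= k)%nat -> RInt (fun t => h t * cos (INR k * t)) 0 (2 * PI) = 0 /\
                          RInt (fun t => h t * sin (INR k * t)) 0 (2 * PI) = 0).
  { intros k hk1. destruct (hk k hk1) as [e1 e2]. destruct (int_cos k hk1) as [e3 e4]. split.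
    - rewrite (RInt_extR _ (fun t => 1 * (g t * cos (INR k * t)) + (- c) * cos (INR k * t))).
      rewrite RInt_lin, e1, e3. toR; ring.
      apply cont_ex_RInt; intros; apply cmul; auto; apply cont_cos.
      apply cont_ex_RInt; intros; apply cont_cos.
      intros; unfold h; toR; ring.
    - rewrite (RInt_extR _ (fun t => 1 * (g t * sin (INR k * t)) + (- c) * sin (INR k * t))).
      rewrite RInt_lin, e2, e4. toR; ring.
      apply cont_ex_RInt; intros; apply cmul; auto; apply cont_sin.
      apply cont_ex_RInt; intros; apply cont_sin.
      intros; unfold h; toR; ring. }
  assert (hper : forall t, h (t + 2 * PI) = h t) by (intros; unfold h; rewrite hp; auto).
  assert (hz : forall x0 n, RInt (fun t => h t * Kf (x0 - t) ^ n) 0 (2 * PI) = 0).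
  { intros x0 n. transitivity (RInt (fun t => h t * (Kf (x0 - t) ^ n * cos (INR 0 * (x0 - t)))) 0 (2 * PI)).
    2: apply (Zker h ch h0 hkh x0 n 0). apply RInt_extR. intros. simpl INR.
    rewrite Rmult_0_l, cos_0. toR; ring. }
  assert (hle : forall x, h x <= 0) by (intros x; apply (conc h x ch hper (hz x))).
  assert (hge : forall x, - h x <= 0).
  { intros x. apply (conc (fun t => - h t) x).
    - intros; apply (continuity_pt_opp h); auto.
    - intros; rewrite hper; auto.
    - intros n. rewrite (RInt_extR _ (fun t => (-1) * (h t * Kf (x - t) ^ n))).
      rewrite RInt_lin1, hz. toR; ring.
      apply cont_ex_RInt; intros; apply cmul; auto; apply cont_kn.
      intros; toR; ring. }
  intros t1 t2. assert (h t1 = 0) by (specialize (hle t1); specialize (hge t1); lra).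
  assert (h t2 = 0) by (specialize (hle t2); specialize (hge t2); lra).
  unfold h in *. lra.
Qed.
Open Scope list_scope.

Lemma strip_cont a b (G : R -> R -> R) t r : cont_strip a b G -> a <= r <= b ->
  cont_in a b (fun s => G s t) r.
Proof.
  intros hG hr eps he. destruct (hG r t hr eps he) as [d [hd H]]. exists d; split; auto.
  intros y hy hyr. apply H; auto. rewrite Rminus_diag, Rabs_R0; auto.
Qed.

Lemma pot_pos m lam s (k : nat) : 0 < m -> lam <= 0 -> 0 < s -> (1 <= k)%nat ->
  0 < INR k ^ 2 / s ^ 2 - (m / s ^ 3 * / (1 + m / (2 * s)) ^ 2 + lam * (1 + m / (2 * s)) ^ 4).
Proof.
  intros hm hl hs hk.
  assert (hK : 1 <= INR k) by (apply (le_INR 1); auto).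
  set (x := m / (2 * s)). assert (hx : 0 < x) by (unfold x; apply Rdiv_lt_0_compat; lra).
  assert (E : m / s ^ 3 * / (1 + x) ^ 2 = 2 * x / (s ^ 2 * (1 + x) ^ 2)) by (unfold x; field; lra).
  rewrite E.
  assert (h4 : lam * (1 + x) ^ 4 <= 0).
  { assert (0 <= (1 + x) ^ 4) by (apply pow_le; lra). nra. }
  assert (hD : 0 < (1 + x) ^ 2) by (apply pow_lt; lra).
  assert (hs2 : 0 < s ^ 2) by (apply pow_lt; lra).
  assert (2 * x / (s ^ 2 * (1 + x) ^ 2) < INR k ^ 2 / s ^ 2).
  { apply (Rmult_lt_reg_r (s ^ 2 * (1 + x) ^ 2)). apply Rmult_lt_0_compat; auto.
    replace (2 * x / (s ^ 2 * (1 + x) ^ 2) * (s ^ 2 * (1 + x) ^ 2)) with (2 * x) by (field; lra).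
    replace (INR k ^ 2 / s ^ 2 * (s ^ 2 * (1 + x) ^ 2)) with (INR k ^ 2 * (1 + x) ^ 2) by (field; lra).
    assert (h1 : 1 <= INR k ^ 2) by (simpl; nra).
    assert (h2 : 4 * x <= (1 + x) ^ 2) by (pose proof (Rle_0_sqr (1 - x)); unfold Rsqr in *; simpl; nra).
    assert (h3 : 1 * (1 + x) ^ 2 <= INR k ^ 2 * (1 + x) ^ 2) by (apply Rmult_le_compat_r; lra).
    lra. }
  lra.
Qed.

Lemma coef0 m Rr lam (F : list bool -> R -> R -> R) (w : R -> R) (k : nat) :
  0 < m -> m / 2 < Rr -> lam <= 0 -> (1 <= k)%nat ->
  (forall w, cont_strip (m / 2) Rr (F w)) ->
  (forall w r t, in_strip (m / 2) Rr r -> deriv_within (m / 2) Rr (fun s => F w s t) r (F (true :: w) r t)) ->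
  (forall w r t, in_strip (m / 2) Rr r -> derivable_pt_lim (fun s => F w r s) t (F (false :: w) r t)) ->
  (forall r t, in_strip (m / 2) Rr r ->
       F (true :: true :: nil) r t + F (true :: nil) r t / r
       + F (false :: false :: nil) r t / r ^ 2
       + m / r ^ 3 * / (1 + m / (2 * r)) ^ 2 * F nil r t
       + lam * (1 + m / (2 * r)) ^ 4 * F nil r t = 0) ->
  (forall t, F (true :: nil) (m / 2) t = 0) -> (forall t, F nil Rr t = 0) ->
  (forall t, continuity_pt w t) -> (forall t, Rabs (w t) <= 1) ->
  (forall r, m / 2 <= r <= Rr -> RInt (fun t => F (false :: false :: nil) r t * w t) 0 (2 * PI) =
             - (INR k) ^ 2 * RInt (fun t => F nil r t * w t) 0 (2 * PI)) ->
  forall r, m / 2 <= r <= Rr -> RInt (fun t => F nil r t * w t) 0 (2 * PI) = 0.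
Proof.
  intros hm hR hl hk hcont hdr hdt hpde hneu hdir hw hw1 hibp.
  pose proof PI_RGT_0 as hPI.
  assert (ct : forall v r t, m / 2 <= r <= Rr -> continuity_pt (F v r) t).
  { intros v r t hr. apply derivable_continuous_pt. exists (F (false :: v) r t). apply hdt. exact hr. }
  set (I := fun v r => RInt (fun t => F v r t * w t) 0 (2 * PI)).
  assert (exI : forall v r, m / 2 <= r <= Rr -> ex_RInt (fun t => F v r t * w t) 0 (2 * PI)).
  { intros; apply cont_ex_RInt; intros; apply cmul; auto. }
  apply (maxp0 (m / 2) Rr (I nil) (I (true :: nil)) (I (true :: true :: nil))
     (fun s => - / s) (fun s => INR k ^ 2 / s ^ 2 - (m / s ^ 3 * / (1 + m / (2 * s)) ^ 2 + lam * (1 + m / (2 * s)) ^ 4))).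
  - exact hR.
  - intros; apply int_cont; auto; lra.
  - intros; apply int_cont; auto; lra.
  - intros; apply int_cont; auto; lra.
  - intros s hs. apply int_deriv with (a := m / 2) (b := Rr); auto; try lra.
    intros r t hr. apply (dw_lim (m / 2) Rr); auto. apply hdr. unfold in_strip; lra.
  - intros s hs. apply int_deriv with (a := m / 2) (b := Rr); auto; try lra.
    intros r t hr. apply (dw_lim (m / 2) Rr); auto. apply hdr. unfold in_strip; lra.
  - unfold I. transitivity (RInt (fun _ => 0) 0 (2 * PI)). apply RInt_extR. intros; rewrite hneu; ring.
    apply RInt_zero.
  - unfold I. transitivity (RInt (fun _ => 0) 0 (2 * PI)). apply RInt_extR. intros; rewrite hdir; ring.
    apply RInt_zero.
  - intros s hs. assert (hs0 : 0 < s) by lra.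
    unfold I. rewrite (RInt_extR _ (fun t => (- / s) * (F (true :: nil) s t * w t)
        + (- / s ^ 2) * (F (false :: false :: nil) s t * w t)
        + (- (m / s ^ 3 * / (1 + m / (2 * s)) ^ 2 + lam * (1 + m / (2 * s)) ^ 4)) * (F nil s t * w t))).
    rewrite RInt_lin3; auto. fold (I (true :: nil) s). rewrite hibp by auto. fold (I nil s). toR. field. lra.
    intros t _. assert (hp := hpde s t ltac:(unfold in_strip; lra)).
    replace (F (true :: true :: nil) s t) with (- (F (true :: nil) s t / s + F (false :: false :: nil) s t / s ^ 2
       + m / s ^ 3 * / (1 + m / (2 * s)) ^ 2 * F nil s t + lam * (1 + m / (2 * s)) ^ 4 * F nil s t)) by lra.
    toR. field. lra.
  - intros s hs. apply pot_pos; auto; lra.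
Qed.

Lemma partA m Rr lam (hm : 0 < m) (hR : m / 2 < Rr) (hlam : lam <= 0) u :
  is_solution m Rr lam u -> forall r t1 t2, m / 2 <= r <= Rr -> u r t1 = u r t2.
Proof.
  intros [hper [F [[hF0 [hcont [hdr hdt]]] [hpde [hneu hdir]]]]] r t1 t2 hr.
  subst u.
  assert (ct : forall v r t, m / 2 <= r <= Rr -> continuity_pt (F v r) t).
  { intros v r0 t hr0. apply derivable_continuous_pt. exists (F (false :: v) r0 t). apply hdt. exact hr0. }

  apply (complete (F nil r)); auto.
  intros k hk.
  assert (hibp : forall r, m / 2 <= r <= Rr -> RInt (fun t => F (false :: false :: nil) r t * cos (INR k * t)) 0 (2 * PI) =
       - INR k ^ 2 * RInt (fun t => F nil r t * cos (INR k * t)) 0 (2 * PI) /\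
      RInt (fun t => F (false :: false :: nil) r t * sin (INR k * t)) 0 (2 * PI) =
       - INR k ^ 2 * RInt (fun t => F nil r t * sin (INR k * t)) 0 (2 * PI)).
  { intros r' hr'. apply (ibp (F nil r') (F (false :: nil) r') (F (false :: false :: nil) r') k).
    - intros; apply (hdt nil r' t); exact hr'.
    - intros; apply (hdt (false :: nil) r' t); exact hr'.
    - intros; apply ct; exact hr'.
    - intros; apply hper. }
  split.
  - apply (coef0 m Rr lam F (fun t => cos (INR k * t)) k); auto.
    intros; apply cont_cos. intros; apply Rabs_le; apply COS_bound. intros r' hr'; apply (hibp r' hr').
  - apply (coef0 m Rr lam F (fun t => sin (INR k * t)) k); auto.
    intros; apply cont_sin. intros; apply Rabs_le; apply SIN_bound. intros r' hr'; apply (hibp r' hr').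
Qed.

Lemma const_deriv (f : R -> R) t c : (forall s, f s = c) -> derivable_pt_lim f t 0.
Proof.
  intros hf eps he. exists (mkposreal 1 Rlt_0_1). intros h hh _. rewrite !hf.
  replace ((c - c) / h - 0) with 0 by (field; auto). rewrite Rabs_R0; auto.
Qed.

Lemma cont_in_lin a b (f g : R -> R) al be x : a <= b -> a <= x <= b ->
  cont_in a b f x -> cont_in a b g x -> cont_in a b (fun s => al * f s + be * g s) x.
Proof.
  intros hab hx hf hg. apply clamp_cont_in; auto.
  apply (cadd (fun s => al * f (clamp a b s)) (fun s => be * g (clamp a b s))); apply ckm; apply cont_in_clamp; auto.
Qed.

Definition Vpot m lam s := m / s ^ 3 * / (1 + m / (2 * s)) ^ 2 + lam * (1 + m / (2 * s)) ^ 4.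

Lemma sol_data m Rr lam (hm : 0 < m) (hR : m / 2 < Rr) (hlam : lam <= 0) u :
  is_solution m Rr lam u -> exists U1 U2 : R -> R,
    (forall s, m / 2 <= s <= Rr -> cont_in (m / 2) Rr (fun s => u s 0) s) /\
    (forall s, m / 2 <= s <= Rr -> cont_in (m / 2) Rr U1 s) /\
    (forall s, m / 2 < s < Rr -> derivable_pt_lim (fun s => u s 0) s (U1 s)) /\
    (forall s, m / 2 < s < Rr -> derivable_pt_lim U1 s (U2 s)) /\
    U1 (m / 2) = 0 /\
    (forall s, m / 2 <= s <= Rr -> U2 s = (- / s) * U1 s + (- Vpot m lam s) * u s 0) /\
    (forall r t, m / 2 <= r <= Rr -> u r t = u r 0).
Proof.
  intros hs. assert (hrad := partA m Rr lam hm hR hlam u hs).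
  destruct hs as [hper [F [[hF0 [hcont [hdr hdt]]] [hpde [hneu hdir]]]]].
  subst u.
  assert (hF1 : forall r t, m / 2 <= r <= Rr -> F (false :: nil) r t = 0).
  { intros r t hr. apply (uniqueness_limite (fun s => F nil r s) t). apply hdt; exact hr.
    apply (const_deriv _ t (F nil r 0)). intros; apply hrad; auto. }
  assert (hF2 : forall r t, m / 2 <= r <= Rr -> F (false :: false :: nil) r t = 0).
  { intros r t hr. apply (uniqueness_limite (fun s => F (false :: nil) r s) t). apply hdt; exact hr.
    apply (const_deriv _ t 0). intros; apply hF1; auto. }
  exists (fun s => F (true :: nil) s 0), (fun s => F (true :: true :: nil) s 0).
  split; [|split; [|split; [|split; [|split; [|split]]]]].
  - intros s hs. apply (strip_cont _ _ (F nil) 0 s (hcont nil) hs).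
  - intros s hs. apply (strip_cont _ _ (F (true :: nil)) 0 s (hcont _) hs).
  - intros s hs. apply (dw_lim (m / 2) Rr); auto. apply hdr. unfold in_strip; lra.
  - intros s hs. apply (dw_lim (m / 2) Rr); auto. apply hdr. unfold in_strip; lra.
  - apply hneu.
  - intros s hs. assert (hp := hpde s 0 hs). rewrite hF2 in hp by auto. unfold Vpot.
    assert (0 < s) by lra. apply (Rmult_eq_reg_l s); [|lra].
    replace (F (true :: true :: nil) s 0) with
      (- (F (true :: nil) s 0 / s + 0 / s ^ 2 + m / s ^ 3 * / (1 + m / (2 * s)) ^ 2 * F nil s 0 +
          lam * (1 + m / (2 * s)) ^ 4 * F nil s 0)) by lra.
    field. lra.
  - intros r t hr; apply hrad; exact hr.
Qed.

Lemma dlin (f g : R -> R) x lf lg al be : derivable_pt_lim f x lf -> derivable_pt_lim g x lg ->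
  derivable_pt_lim (fun s => al * f s + be * g s) x (al * lf + be * lg).
Proof.
  intros h1 h2. apply (derivable_pt_lim_plus (fun s => al * f s) (fun s => be * g s)).
  exact (derivable_pt_lim_scal f al x lf h1). exact (derivable_pt_lim_scal g be x lg h2).
Qed.

Lemma coef_cont m lam s : 0 < m -> 0 < s ->
  continuity_pt (fun s => Rabs (- / s) + Rabs (- Vpot m lam s)) s.
Proof.
  intros hm hs. apply cadd; apply (continuity_pt_comp _ Rabs); try apply Rcontinuity_abs.
  - apply (proj2 (continuity_pt_filterlim _ _)). change (continuous (fun s => - / s) s).
    apply (ex_derive_continuous (K:=R_AbsRing) (V:=R_NormedModule)). auto_derive. lra.
  - apply (proj2 (continuity_pt_filterlim _ _)). change (continuous (fun s => - Vpot m lam s) s).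
    apply (ex_derive_continuous (K:=R_AbsRing) (V:=R_NormedModule)). unfold Vpot. auto_derive.
    assert (0 < m / (2 * s)) by (apply Rdiv_lt_0_compat; lra).
    repeat split; try lra; apply Rgt_not_eq; repeat apply Rmult_lt_0_compat; lra.
Qed.

Lemma comb m Rr lam (hm : 0 < m) (hR : m / 2 < Rr) (y1 y2 Y1 Y2 z1 z2 Z1 Z2 : R -> R) :
  (forall s, m / 2 <= s <= Rr -> cont_in (m / 2) Rr y1 s) ->
  (forall s, m / 2 <= s <= Rr -> cont_in (m / 2) Rr Y1 s) ->
  (forall s, m / 2 < s < Rr -> derivable_pt_lim y1 s (Y1 s)) ->
  (forall s, m / 2 < s < Rr -> derivable_pt_lim Y1 s (Y2 s)) ->
  Y1 (m / 2) = 0 ->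
  (forall s, m / 2 <= s <= Rr -> Y2 s = (- / s) * Y1 s + (- Vpot m lam s) * y1 s) ->
  (forall s, m / 2 <= s <= Rr -> cont_in (m / 2) Rr z1 s) ->
  (forall s, m / 2 <= s <= Rr -> cont_in (m / 2) Rr Z1 s) ->
  (forall s, m / 2 < s < Rr -> derivable_pt_lim z1 s (Z1 s)) ->
  (forall s, m / 2 < s < Rr -> derivable_pt_lim Z1 s (Z2 s)) ->
  Z1 (m / 2) = 0 ->
  (forall s, m / 2 <= s <= Rr -> Z2 s = (- / s) * Z1 s + (- Vpot m lam s) * z1 s) ->
  forall al be, al * y1 (m / 2) + be * z1 (m / 2) = 0 ->
  forall s, m / 2 <= s <= Rr -> al * y1 s + be * z1 s = 0.
Proof.
  intros c1 c2 d1 d2 n1 o1 c3 c4 d3 d4 n2 o2 al be h0.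
  destruct (ext_val (m / 2) Rr (fun s => Rabs (- / s) + Rabs (- Vpot m lam s)) ltac:(lra)) as [M [hM HM]].
  { intros x hx. apply cont_pt_in. apply coef_cont; lra. }
  set (K := Rabs (- / M) + Rabs (- Vpot m lam M)).
  assert (hK : 0 <= K) by (unfold K; pose proof (Rabs_pos (- / M)); pose proof (Rabs_pos (- Vpot m lam M)); lra).
  apply (uniq (m / 2) Rr (fun s => al * y1 s + be * z1 s) (fun s => al * Y1 s + be * Z1 s)
     (fun s => al * Y2 s + be * Z2 s) (fun s => - / s) (fun s => - Vpot m lam s) K); auto.
  - intros; apply cont_in_lin; auto; lra.
  - intros; apply cont_in_lin; auto; lra.
  - intros; apply dlin; auto.
  - intros; apply dlin; auto.
  - intros s hs. rewrite o1, o2 by lra. ring.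
  - intros s hs. specialize (HM s ltac:(lra)). fold K in HM.
    pose proof (Rabs_pos (- / s)). pose proof (Rabs_pos (- Vpot m lam s)). split; lra.
  - rewrite n1, n2; ring.
Qed.

Theorem mainTheorem5 (m Rr lam : R) (hm : 0 < m) (hR : m / 2 < Rr) (hlam : lam <= 0) :
  (forall u : R -> R -> R, is_solution m Rr lam u ->
     forall r t1 t2, m / 2 <= r <= Rr -> u r t1 = u r t2) /\
  (forall u v : R -> R -> R, is_solution m Rr lam u -> is_solution m Rr lam v ->
     exists a b : R, (a <> 0 \/ b <> 0) /\
       forall r t, m / 2 <= r <= Rr -> a * u r t + b * v r t = 0).
Proof.
  split.
  - intros u hu. apply (partA m Rr lam hm hR hlam u hu).
  - intros u v hu hv.
    destruct (sol_data m Rr lam hm hR hlam u hu) as [U1 [U2 [c1 [c2 [d1 [d2 [n1 [o1 r1]]]]]]]].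
    destruct (sol_data m Rr lam hm hR hlam v hv) as [W1 [W2 [c3 [c4 [d3 [d4 [n2 [o2 r2]]]]]]]].
    assert (key := comb m Rr lam hm hR (fun s => u s 0) U1 U1 U2 (fun s => v s 0) W1 W1 W2
       c1 c2 d1 d2 n1 o1 c3 c4 d3 d4 n2 o2).
    destruct (Req_dec (u (m / 2) 0) 0) as [hu0|hu0]; [destruct (Req_dec (v (m / 2) 0) 0) as [hv0|hv0]|].
    + exists 1, 0. split; [left; lra|]. intros r t hr. rewrite (r1 r t hr), (r2 r t hr).
      apply (key 1 0); auto. rewrite hu0, hv0; ring.
    + exists (v (m / 2) 0), (- u (m / 2) 0). split; [left; auto|]. intros r t hr.
      rewrite (r1 r t hr), (r2 r t hr). apply key; auto. ring.
    + exists (v (m / 2) 0), (- u (m / 2) 0). split; [right; intro; apply hu0; lra|]. intros r t hr.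
      rewrite (r1 r t hr), (r2 r t hr). apply key; auto. ring.
Qed.
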